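(* There exists a sequence $f_0, f_1, \ldots \in \{0,1\}$ such that for every integer $n = \langle d_0, \ldots, d_s \rangle_2 \geq 2$: (i) if $d_0 = f_0, \ldots, d_s = f_s$, then $\nu_2(H(n,2)) \geq 1 - s$; (ii) if $d_0 = f_0, \ldots, d_{r-1} = f_{r-1}$ and $d_r \neq f_r$ for some positive integer $r \leq s$, then $\nu_2(H(n,2)) = r - 2s$. Precisely, the sequence is determined recursively by $f_0 = 1$ and, for every positive integer $s$, $f_s = 1$ if $\nu_2(H(\langle f_0, \ldots, f_{s-1}, 1 \rangle_2, 2)) \geq 1 - s$, and $f_s = 0$ otherwise. In particular, $f_0 = 1$, $f_1 = 1$, $f_2 = 0$.
   Context: For integers $n \geq k \geq 1$, $H(n,k) := \sum_{1 \leq i_1 < \cdots < i_k \leq n} \frac{1}{i_1 \cdots i_k}$. $\nu_2$ denotes the $2$-adic valuation on the rationals. The notation $\langle a_0, \ldots, a_v \rangle_2 := \sum_{i=0}^v a_i 2^{v-i}$ denotes a binary representation, with $a_i \in \{0,1\}$ and $a_0 = 1$. *)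

(* Defs.v *)
From mathcomp Require Import all_boot all_order all_algebra.
Set Implicit Arguments. Unset Strict Implicit. Unset Printing Implicit Defensive.
Import Order.TTheory GRing.Theory Num.Theory.
Local Open Scope ring_scope.

(* H(n,k) = sum over 1 <= i_1 < ... < i_k <= n of 1/(i_1 ... i_k), in rat.
   A k-subset S of 'I_n encodes {i+1 | i in S}. *)
Definition H (n k : nat) : rat :=
  \sum_(S : {set 'I_n} | #|S| == k) \prod_(i in S) ((i.+1)%:R)^-1.

(* 2-adic valuation of a rational: nu2(a/b) = v2(a) - v2(b); nu2 0 := 0
   (convention irrelevant here since H(n,2) > 0 for n >= 2). *)
Definition nu2 (q : rat) : int :=
  ((logn 2 `|numq q|%N)%:Z - (logn 2 `|denq q|%N)%:Z)%R.

Definition binval (v : nat) (a : nat -> bool) : nat :=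
  (\sum_(i < v.+1) (a i : nat) * 2 ^ (v - i))%N.

(* Main.v *)
Require Import Defs.
From mathcomp Require Import all_boot all_order all_algebra.
From mathcomp Require Import ring lra zify.
Import Order.TTheory GRing.Theory Num.Theory.
Set Implicit Arguments. Unset Strict Implicit. Unset Printing Implicit Defensive.
Local Open Scope ring_scope.

Definition Z2 (q : rat) := exists (a : int) (b : nat), odd b /\ q = a%:~R / b%:R.
Definition Dv (k : nat) (q : rat) := exists c, Z2 c /\ q = 2%:R ^+ k * c.

Lemma Z2_int (a : int) : Z2 a%:~R.
Proof. exists a, 1%N; split => //; by rewrite divr1. Qed.

Lemma Z2_D x y : Z2 x -> Z2 y -> Z2 (x + y).
Proof.
move=> [a [b [hb ->]]] [a' [b' [hb' ->]]].
exists (a * b'%:Z + a' * b%:Z), (b * b')%N; split; first by rewrite oddM hb hb'.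
have b0 : (b%:R : rat) != 0 by rewrite pnatr_eq0; case: b hb.
have b0' : (b'%:R : rat) != 0 by rewrite pnatr_eq0; case: b' hb'.
rewrite natrM rmorphD !rmorphM /=. rewrite -!pmulrn. field. by rewrite b0 b0'.
Qed.

Lemma Z2_M x y : Z2 x -> Z2 y -> Z2 (x * y).
Proof.
move=> [a [b [hb ->]]] [a' [b' [hb' ->]]].
exists (a * a'), (b * b')%N; split; first by rewrite oddM hb hb'.
rewrite natrM rmorphM /= invfM. by rewrite mulrACA.
Qed.

Lemma Z2_N x : Z2 x -> Z2 (- x).
Proof. move=> h; have := Z2_M (Z2_int (-1)) h. by rewrite rmorphN /= mulN1r. Qed.

Lemma Z2_inv (b : nat) : odd b -> Z2 (b%:R)^-1.
Proof. move=> hb; exists 1, b; split => //; by rewrite div1r. Qed.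

Lemma Dv_D k x y : Dv k x -> Dv k y -> Dv k (x + y).
Proof. move=> [c [hc ->]] [c' [hc' ->]]; exists (c + c'); split; [exact: Z2_D | by rewrite mulrDr]. Qed.

Lemma Dv_N k x : Dv k x -> Dv k (- x).
Proof. move=> [c [hc ->]]; exists (- c); split; [exact: Z2_N | by rewrite mulrN]. Qed.

Lemma Dv_B k x y : Dv k x -> Dv k y -> Dv k (x - y).
Proof. by move=> h1 h2; apply: Dv_D => //; apply: Dv_N. Qed.

Lemma Dv_M k m x y : Dv k x -> Dv m y -> Dv (k + m) (x * y).
Proof.
move=> [c [hc ->]] [c' [hc' ->]]; exists (c * c'); split; first exact: Z2_M.
by rewrite exprD mulrACA.
Qed.

Lemma Dv_le k m x : (m <= k)%N -> Dv k x -> Dv m x.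
Proof.
move=> hmk [c [hc ->]]; exists (2%:R ^+ (k - m) * c); split.
  by apply: Z2_M => //; rewrite -natrX; apply: (Z2_int (2 ^ (k - m))%N).
by rewrite mulrA -exprD subnKC.
Qed.

Lemma Dv0 k : Dv k 0.
Proof. exists 0; split; [exact: (Z2_int 0) | by rewrite mulr0]. Qed.

Lemma Dv_Z2 x : Z2 x -> Dv 0 x.
Proof. by move=> h; exists x; rewrite expr0 mul1r. Qed.

Lemma Dv_scale k x : Z2 x -> Dv k (2%:R ^+ k * x).
Proof. by move=> h; exists x. Qed.

Lemma Dv_Z2' k x : Dv k x -> Z2 x.
Proof. move=> h; have [c [hc ->]] := Dv_le (leq0n k) h. by rewrite expr0 mul1r. Qed.

Definition Odd (x : rat) := Dv 1 (x - 1).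

Lemma Odd_Z2 x : Odd x -> Z2 x.
Proof. move=> h; have := Z2_D (Dv_Z2' h) (Z2_int 1). by rewrite subrK. Qed.

Lemma Odd_M x y : Odd x -> Odd y -> Odd (x * y).
Proof.
move=> hx hy. rewrite /Odd. have -> : x * y - 1 = (x - 1) * (y - 1) + (x - 1) + (y - 1) by ring.
apply: Dv_D; [apply: Dv_D => //|] => //.
by apply: (Dv_le (m:=1) _ (Dv_M hx hy)).
Qed.

Lemma Odd_inv (b : nat) : odd b -> Odd (b%:R)^-1.
Proof.
move=> hb; exists ((1 - b%:R) / 2 / b%:R); split.
  have [c hc] : exists c, b = (c.*2).+1.
    by exists b./2; rewrite -{1}(odd_double_half b) hb add1n.
  have -> : (1 - b%:R) / 2 / b%:R = (- (c%:Z))%:~R / (b%:R : rat).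
    have hbR : (b%:R:rat) = c%:R * 2 + 1 by rewrite hc -addn1 -muln2 natrD natrM.
    rewrite {1}hbR rmorphN /= -pmulrn; field.
    by rewrite pnatr_eq0 hc.
  by exists (- (c%:Z)), b.
have b0 : (b%:R : rat) != 0 by rewrite pnatr_eq0; case: b hb.
rewrite expr1. field. by rewrite b0.
Qed.

Lemma Odd_D x y : Odd x -> Dv 1 y -> Odd (x + y).
Proof. move=> hx hy; rewrite /Odd addrAC; exact: Dv_D. Qed.

Lemma pair_eq (T : finType) (S : {set T}) (i j : T) : j != i ->
  [&& #|S| == 2, i \in S & j \in S] = (S == [set i; j]).
Proof.
move=> hji; have hij : i != j by rewrite eq_sym.
apply/idP/eqP.
  case/and3P=> /eqP hS hi hj; apply/eqP; rewrite eq_sym eqEcard.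

  rewrite hS cards2 hij andbT.
  by apply/subsetP=> x; rewrite !inE => /orP[]/eqP->.
by move=> ->; rewrite cards2 hij !inE !eqxx orbT.
Qed.

Lemma prod_pair (T : finType) (S : {set T}) (w : T -> rat) : #|S| == 2 ->
  (\prod_(i in S) w i) *+ 2 = \sum_(i in S) \sum_(j in S | j != i) w i * w j.
Proof.
case/cards2P=> x [y [hxy ->]].
have hy : x \notin [set y] by rewrite inE.
rewrite big_setU1 //= big_set1.
rewrite big_setU1 //= big_set1.
rewrite !big_mkcondr !big_setU1 //= !big_set1.
by rewrite eqxx [y == x]eq_sym hxy /= eqxx /= add0r addr0 mulr2n [w y * _]mulrC.
Qed.

Lemma sum2 (T : finType) (w : T -> rat) :
  (\sum_(S : {set T} | #|S| == 2) \prod_(i in S) w i) *+ 2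
    = (\sum_i w i) ^+ 2 - \sum_i w i ^+ 2.
Proof.
pose G (S : {set T}) (i j : T) := if [&& #|S| == 2, i \in S, j \in S & j != i] then w i * w j else 0.
have L : (\sum_(S : {set T} | #|S| == 2) \prod_(i in S) w i) *+ 2
        = \sum_S \sum_i \sum_j G S i j.
  rewrite -sumrMnl big_mkcond; apply: eq_bigr => S _.
  case: ifP => hS.
    rewrite prod_pair // big_mkcond; apply: eq_bigr => i _.
    case: ifP => hi.
      rewrite big_mkcond; apply: eq_bigr => j _.
      by rewrite /G hS hi.
    by rewrite big1 // => j _; rewrite /G hS hi.
  by rewrite big1 // => i _; rewrite big1 // => j _; rewrite /G hS.
have R : (\sum_i w i) ^+ 2 - \sum_i w i ^+ 2 = \sum_i \sum_j \sum_S G S i j.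
  rewrite expr2 mulr_suml -sumrB; apply: eq_bigr => i _.
  rewrite mulr_sumr (bigD1 i) //= -expr2 addrAC subrr add0r.
  rewrite [RHS](bigD1 i) //= [in X in _ = X + _]big1 ?add0r; last first.
    by move=> S _; rewrite /G eqxx !andbF.
  rewrite big_mkcond [RHS]big_mkcond; apply: eq_bigr => j _.
  case: ifP => hj.
    rewrite (eq_bigr (fun S => if S == [set i; j] then w i * w j else 0)).
      by rewrite -big_mkcond big_pred1_eq.
    by move=> S _; rewrite /G hj andbT -pair_eq // -andbA.
  by [].
rewrite L R exchange_big; apply: eq_bigr => i _; by rewrite exchange_big.
Qed.

Definition H1 (n : nat) : rat := \sum_(i < n) ((i.+1)%:R)^-1.
Definition H2 (n : nat) : rat := \sum_(i < n) ((i.+1)%:R ^+ 2)^-1.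

Lemma Hform n : H n 2 *+ 2 = H1 n ^+ 2 - H2 n.
Proof.
rewrite /H (sum2 (fun i : 'I_n => ((i.+1)%:R : rat)^-1)) /H1 /H2.
by congr (_ - _); apply: eq_bigr => i _; rewrite exprVn.
Qed.

Lemma H1S n : H1 n.+1 = H1 n + (n.+1%:R)^-1.
Proof. by rewrite /H1 big_ord_recr. Qed.
Lemma H2S n : H2 n.+1 = H2 n + ((n.+1%:R) ^+ 2)^-1.
Proof. by rewrite /H2 big_ord_recr. Qed.
Lemma H1_0 : H1 0 = 0. Proof. by rewrite /H1 big_ord0. Qed.
Lemma H2_0 : H2 0 = 0. Proof. by rewrite /H2 big_ord0. Qed.

Lemma halfS_cases N : (odd N = false /\ N.+1./2 = N./2) \/ (odd N /\ N.+1./2 = (N./2).+1 /\ N.+1 = ((N./2).+1 * 2)%N).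
Proof.
have e1 : N.+1./2 = (odd N + N./2)%N by rewrite -uphalf_half.
have e := odd_double_half N.
case hN: (odd N); rewrite hN in e e1.
  right; split => //; split => //.
  by rewrite -{1}e add1n muln2 -doubleS.
by left.
Qed.

Lemma O1 N : Z2 (H1 N - H1 N./2 / 2).
Proof.
elim: N => [|N IH]; first by rewrite H1_0 mul0r subr0; exact: (Z2_int 0).
have [[hN ->]|[hN [-> e]]] := halfS_cases N.
  rewrite H1S addrAC; apply: Z2_D => //; apply: Z2_inv => /=; by rewrite hN.
rewrite H1S H1S.
have -> : H1 N + (N.+1%:R)^-1 - (H1 N./2 + ((N./2).+1%:R)^-1) / 2 = H1 N - H1 N./2 / 2
   + ((N.+1%:R)^-1 - ((N./2).+1%:R)^-1 / 2) by ring.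
rewrite e natrM.
have h0 : ((N./2).+1%:R : rat) != 0 by rewrite pnatr_eq0.
have -> : (((N./2).+1%:R * 2%:R)^-1 - ((N./2).+1%:R)^-1 / 2 : rat) = 0.
  by field; rewrite nat1r pnatr_eq0.
by rewrite addr0.
Qed.

Lemma O2 N : Z2 (H2 N - H2 N./2 / 4).
Proof.
elim: N => [|N IH]; first by rewrite H2_0 mul0r subr0; exact: (Z2_int 0).
have [[hN ->]|[hN [-> e]]] := halfS_cases N.
  rewrite H2S addrAC; apply: Z2_D => //; rewrite -natrX; apply: Z2_inv.
  by rewrite oddX /= hN.
rewrite H2S H2S.
have -> : H2 N + ((N.+1%:R)^+2)^-1 - (H2 N./2 + (((N./2).+1%:R)^+2)^-1) / 4 = H2 N - H2 N./2 / 4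
   + (((N.+1%:R)^+2)^-1 - (((N./2).+1%:R)^+2)^-1 / 4) by ring.
rewrite e natrM.
have h0 : ((N./2).+1%:R : rat) != 0 by rewrite pnatr_eq0.
have -> : ((((N./2).+1%:R * 2%:R)^+2)^-1 - (((N./2).+1%:R)^+2)^-1 / 4 : rat) = 0.
  by field; rewrite nat1r pnatr_eq0.
by rewrite addr0.
Qed.

Definition X (s n : nat) : rat := 2%:R ^+ s * H1 n.
Definition Y (s n : nat) : rat := (2%:R ^+ s) ^+ 2 * H2 n.
Definition Zf (s n : nat) : rat := X s n ^+ 2 - Y s n.

Lemma ZfE s n : Zf s n = 2%:R ^+ (2 * s).+1 * H n 2.
Proof.
have hH : H n 2 = (H1 n ^+ 2 - H2 n) / 2 by rewrite -Hform mulr2n; field.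
rewrite /Zf /X /Y hH [in RHS]exprS mulnC exprM. by field.
Qed.

Lemma K1 s N : Dv s.+1 (X s.+1 N - X s N./2).
Proof.
have -> : X s.+1 N - X s N./2 = 2%:R ^+ s.+1 * (H1 N - H1 N./2 / 2).
  by rewrite /X exprS; field.
apply: Dv_scale; exact: O1.
Qed.

Lemma K2 s N : Dv (s.+1 + s.+1) (Y s.+1 N - Y s N./2).
Proof.
have -> : Y s.+1 N - Y s N./2 = 2%:R ^+ (s.+1 + s.+1) * (H2 N - H2 N./2 / 4).
  by rewrite /Y exprD !exprS !expr0; field.
apply: Dv_scale; exact: O2.
Qed.

Lemma binval0 d : binval 0 d = d 0%N.
Proof. by rewrite /binval big_ord_recr big_ord0 /= subnn expn0 muln1. Qed.

Lemma binvalS k d : binval k.+1 d = (2 * binval k d + d k.+1)%N.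
Proof.
rewrite /binval big_ord_recr /= subnn expn0 muln1; congr (_ + _)%N.
rewrite big_distrr /=; apply: eq_bigr => i _.
by rewrite subSn ?expnS 1?mulnCA // -ltnS.
Qed.

Lemma binhalf k d : (binval k.+1 d)./2 = binval k d.
Proof. by rewrite binvalS addnC mul2n half_bit_double. Qed.

Lemma K4 k d : d 0%N = true -> Odd (X k (binval k d)).
Proof.
move=> d0; elim: k => [|k IH].
  rewrite binval0 d0 /X expr0 mul1r /H1 big_ord_recr big_ord0 /= add0r invr1.
  by rewrite /Odd subrr; exact: Dv0.
have -> : X k.+1 (binval k.+1 d) = X k (binval k d) + (X k.+1 (binval k.+1 d) - X k (binval k.+1 d)./2).
  by rewrite binhalf; ring.
by apply: Odd_D => //; apply: (Dv_le (k := k.+1)) => //; exact: K1.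
Qed.

Lemma K5a k N : Odd (X k.+1 N) -> Odd (X k N./2) -> Dv (k.+2) (Zf k.+1 N - Zf k N./2).
Proof.
move=> h1 h0.
have -> : Zf k.+1 N - Zf k N./2 = (X k.+1 N - X k N./2) * ((X k.+1 N - 1) + (X k N./2 - 1) + 2%:R ^+ 1 * 1)
   - (Y k.+1 N - Y k N./2) by rewrite /Zf; ring.
apply: Dv_B.
  have -> : k.+2 = (k.+1 + 1)%N by rewrite addn1.
  apply: Dv_M; first exact: K1.
  apply: Dv_D; first exact: Dv_D.
  by apply: Dv_scale; exact: (Z2_int 1).
by apply: (Dv_le (k := (k.+1 + k.+1)%N)); [rewrite addnS addSn !ltnS leq_addl| exact: K2].
Qed.

Lemma K5 k s d : d 0%N = true -> (k <= s)%N ->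
  Dv k.+2 (Zf s (binval s d) - Zf k (binval k d)).
Proof.
move=> d0; elim: s => [|s IH].
  by rewrite leqn0 => /eqP ->; rewrite subrr; exact: Dv0.
rewrite leq_eqVlt => /orP[/eqP <-|hk]; first by rewrite subrr; exact: Dv0.
have -> : Zf s.+1 (binval s.+1 d) - Zf k (binval k d) =
   (Zf s.+1 (binval s.+1 d) - Zf s (binval s.+1 d)./2) + (Zf s (binval s d) - Zf k (binval k d)).
  by rewrite binhalf; ring.
apply: Dv_D; last exact: IH.
apply: (Dv_le (k := s.+2)) => //.
apply: K5a; first exact: K4.
by rewrite binhalf; exact: K4.
Qed.

Lemma K6 j Q : Odd (X j.+1 (Q.*2)) ->
  Dv (j.+3) (Zf j.+1 (Q.*2).+1 - Zf j.+1 (Q.*2) - 2%:R ^+ j.+2).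
Proof.
move=> ha.
set a := X j.+1 (Q.*2).
have hq : ((Q.*2).+1%:R : rat) != 0 by rewrite pnatr_eq0.
have -> : Zf j.+1 (Q.*2).+1 - Zf j.+1 (Q.*2) - 2%:R ^+ j.+2 =
   2%:R ^+ j.+2 * (a * ((Q.*2).+1%:R)^-1 - 1).
  rewrite /Zf /a /X /Y H1S H2S !exprS. by field; rewrite nat1r.
have -> : j.+3 = (j.+2 + 1)%N by rewrite addn1. apply: Dv_M; first by rewrite -[X in Dv _ X]mulr1; apply: Dv_scale; exact: (Z2_int 1).
apply: Odd_M => //; apply: Odd_inv => /=; by rewrite odd_double.
Qed.

Lemma nu2_frac (a : int) (b : nat) : a != 0 -> (0 < b)%N ->
  nu2 (a%:~R / b%:R) = (logn 2 `|a|)%:Z - (logn 2 b)%:Z.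
Proof.
move=> a0 b0; set q := a%:~R / b%:R.
have bR : (b%:R : rat) != 0 by rewrite pnatr_eq0 -lt0n.
have e1 : (numq q)%:~R * (b%:Z)%:~R = (a * denq q)%:~R :> rat.
  rewrite numqE rmorphM /= -pmulrn /q; field; by [].
have e2 : (numq q * b%:Z) = a * denq q by apply: (@intr_inj rat); rewrite rmorphM.
have e3 : (`|numq q| * b)%N = (`|a| * `|denq q|)%N by rewrite -[b]/(`|b%:Z|%N) -!abszM e2.
have q0 : q != 0 by rewrite /q mulf_neq0 // ?invr_eq0 // intr_eq0.
have n0 : (0 < `|numq q|)%N by rewrite absz_gt0 numq_eq0.
have d0 : (0 < `|denq q|)%N by rewrite absz_gt0 gt_eqF // denq_gt0.
have a0' : (0 < `|a|)%N by rewrite absz_gt0.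
have := congr1 (logn 2) e3; rewrite !lognM // => e4.
rewrite /nu2; lia.
Qed.

Lemma nu2_gen (h : rat) (k m : nat) (a : int) (b : nat) : a != 0 -> odd b ->
  2%:R ^+ m * h = 2%:R ^+ k * (a%:~R / b%:R) ->
  nu2 h = (k + logn 2 `|a|)%:Z - m%:Z.
Proof.
move=> a0 hb e.
have b0 : (0 < b)%N by rewrite lt0n; apply: contraTneq hb => ->.
have bR : (b%:R : rat) != 0 by rewrite pnatr_eq0 -lt0n.
have m0 : (2%:R ^+ m : rat) != 0 by rewrite expf_neq0 // pnatr_eq0.
have -> : h = ((2 ^ k)%:Z * a)%:~R / (b * 2 ^ m)%:R.
  apply: (mulfI m0); rewrite e rmorphM /= -pmulrn natrM !natrX. by field; rewrite m0 bR.
rewrite nu2_frac; first last.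
    by rewrite muln_gt0 b0 expn_gt0.
  by rewrite mulf_neq0 // -lt0n expn_gt0.
rewrite abszM /= lognM ?expn_gt0 ?absz_gt0 // lognM ?expn_gt0 //.
rewrite !pfactorK // (@logn_coprime 2 b); last by rewrite coprime_sym coprimen2.
lia.
Qed.

Lemma C1 k s h : Dv k (2%:R ^+ (2 * s).+1 * h) ->
  h = 0 \/ (k%:Z - ((2 * s).+1)%:Z <= nu2 h).
Proof.
move=> [c [[a [b [hb ec]]] e]]; rewrite ec in e.
case: (eqVneq a 0) => [a0|a0].
  left; move: e; rewrite a0 mul0r mulr0 => /eqP; rewrite mulf_eq0 expf_eq0 /=. by move/eqP.

right; rewrite (nu2_gen a0 hb e); lia.
Qed.

Lemma C2 k s h u : Odd u -> 2%:R ^+ (2 * s).+1 * h = 2%:R ^+ k * u ->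
  nu2 h = k%:Z - ((2 * s).+1)%:Z.
Proof.
move=> [c [[a [b [hb ec]]] e]] eh.
have b0 : (0 < b)%N by rewrite lt0n; apply: contraTneq hb => ->.
have bR : (b%:R : rat) != 0 by rewrite pnatr_eq0 -lt0n.
set n := b%:Z + 2 * a.
have hn : ~~ (2 %| `|n|)%N.
  apply/negP => hd.
  have h1 : (2 %| n)%Z by exact: hd.
  have h2 : (2 %| 2 * a)%Z by apply: dvdz_mulr; exact: dvdzz.
  have := rpredB h1 h2; rewrite /n addrK dvdzE /= dvdn2 hb //.
have n0 : n != 0 by apply/eqP => n0; move: hn; rewrite n0.
have eu : u = n%:~R / b%:R.
  have -> : u = (u - 1) + 1 by ring.
  rewrite e ec /n rmorphD rmorphM /= -pmulrn expr1. by field.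
rewrite eu in eh; rewrite (nu2_gen n0 hb eh).
rewrite (@logn_coprime 2 `|n|) ?addn0 //.
by rewrite coprime_sym coprimen2 -[odd _]negbK -dvdn2.
Qed.

Definition cond (s n : nat) : bool := ((1 - s%:Z) <= nu2 (H n 2)).
Fixpoint P (s : nat) : nat :=
  match s with
  | 0 => 1%N
  | s'.+1 => if cond s'.+1 (P s').*2.+1 then (P s').*2.+1 else (P s').*2
  end.
Definition fP (s : nat) : bool := odd (P s).

Lemma PS s : P s.+1 = ((P s).*2 + fP s.+1)%N.
Proof.
rewrite /fP /=; case: ifP => _ /=; first by rewrite odd_double addn1.
by rewrite odd_double addn0.
Qed.

Lemma binP k : binval k fP = P k.
Proof.
elim: k => [|k IH]; first by rewrite binval0.
by rewrite binvalS IH PS mul2n.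
Qed.

Lemma Dv_split k x : Dv k x -> Dv k.+1 x \/ exists u, Odd u /\ x = 2%:R ^+ k * u.
Proof.
move=> [c [[a [b [hb ec]]] ->]].
have ea := divz_eq a 2.
have r0 := modz_ge0 a (isT : (2 : int) != 0).
have r1 := ltz_pmod a (isT : (0 < (2 : int))).
have [c' hc] : exists c', b = (c'.*2).+1.
  by exists b./2; rewrite -{1}(odd_double_half b) hb add1n.
have bR : (b%:R : rat) != 0 by rewrite pnatr_eq0 hc.
have [hr|hr] : (a %% 2)%Z = 0 \/ (a %% 2)%Z = 1 by lia.
  left; exists ((a %/ 2)%Z%:~R / b%:R); split; first by exists (a %/ 2)%Z, b.
  rewrite ec {1}ea hr addr0 rmorphM /= exprS. by field.
right; exists c; split; last by [].
exists (((a %/ 2)%Z - c'%:Z)%:~R / b%:R); split; first by exists ((a %/ 2)%Z - c'%:Z), b.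
have hbR : (b%:R:rat) = c'%:R * 2 + 1 by rewrite hc -addn1 -muln2 natrD natrM.
rewrite ec {1}ea hr rmorphD rmorphM rmorphB /= -pmulrn hbR expr1 rmorph1.
have h2 : ((2:int)%:~R : rat) = 2%:R by [].
by rewrite h2; field; rewrite -hbR.
Qed.

Lemma Odd_add k w : Dv k.+1 w -> exists u, Odd u /\ 2%:R ^+ k + w = 2%:R ^+ k * u.
Proof.
move=> [c [hc ->]]; exists (1 + 2%:R * c); split.
  by rewrite /Odd addrAC subrr add0r; apply: Dv_scale.
by rewrite exprS; ring.
Qed.

Lemma Odd_sub k w : Dv k.+1 w -> exists u, Odd u /\ - 2%:R ^+ k + w = 2%:R ^+ k * u.
Proof.
move=> h; have [u [hu e]] := Odd_add (Dv_D h (Dv_N (Dv_scale k.+1 (Z2_int 1)))).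
exists u; split => //; rewrite -e exprS; ring.
Qed.

Lemma nu2_0 : nu2 0 = 0. Proof. by []. Qed.

Definition dext (s : nat) (b : bool) := fun i => if (i <= s)%N then fP i else b.

Lemma bin_dext k s b : (k <= s)%N -> binval k (dext s b) = P k.
Proof.
move=> hk; rewrite -binP; apply: eq_bigr => i _; rewrite /dext.
by rewrite (leq_trans _ hk) // -ltnS.
Qed.

Lemma bin_dext1 s b : binval s.+1 (dext s b) = ((P s).*2 + b)%N.
Proof. by rewrite binvalS bin_dext // /dext ltnn mul2n. Qed.

Lemma fP0 : fP 0 = true. Proof. by []. Qed.

Lemma IP s : Dv s.+2 (Zf s (P s)).
Proof.
elim: s => [|s IH].
  have -> : Zf 0 (P 0) = 0.
    rewrite /Zf /X /Y /= /H1 /H2 !big_ord_recr !big_ord0 /=. by rewrite !(expr0, mul1r, add0r, invr1, expr1n, subrr).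
  exact: Dv0.
have hK (b : bool) : Dv s.+2 (Zf s.+1 ((P s).*2 + b)%N).
  have := K5 (d := dext s b) (k := s) (s := s.+1) fP0 (leqnSn s).
  rewrite bin_dext1 bin_dext // => h.
  have -> : Zf s.+1 ((P s).*2 + b)%N = (Zf s.+1 ((P s).*2 + b)%N - Zf s (P s)) + Zf s (P s) by ring.
  by apply: Dv_D => //; apply: (Dv_le (k := s.+2)).
have Hc := hK true; rewrite addn1 in Hc.
rewrite /=; case: ifP => hc.
  have [//|[u [hu e]]] := Dv_split Hc.
  rewrite ZfE in e. have := C2 hu e.
  move: hc; rewrite /cond => hc hnu; rewrite hnu in hc. lia.
have [Hc3|[u [hu e]]] := Dv_split Hc.
  rewrite ZfE in Hc3; have [h0|hnu] := C1 Hc3.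
    by move: hc; rewrite /cond h0 nu2_0; lia.
  by move: hc; rewrite /cond; lia.
have ho : Odd (X s.+1 (P s).*2).
  by have := K4 s.+1 (d := dext s false) fP0; rewrite bin_dext1 addn0.
have := K6 ho; rewrite e => h6.
have -> : Zf s.+1 (P s).*2 = 2%:R ^+ s.+2 * (u - 1) - (2%:R ^+ s.+2 * u - Zf s.+1 (P s).*2 - 2%:R ^+ s.+2) by ring.
apply: Dv_B => //.
have -> : s.+3 = (s.+2 + 1)%N by rewrite addn1.
by apply: Dv_M => //; rewrite -[X in Dv _ X]mulr1; apply: Dv_scale; exact: (Z2_int 1).
Qed.

Lemma rec : forall s : nat, (0 < s)%N ->
       fP s = ((1 - (s%:Z))%R <= nu2 (H (binval s (fun i => if (i < s)%N then fP i else true)) 2))%R.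
Proof.
  case=> // s _.
  have -> : binval s.+1 (fun i => if (i < s.+1)%N then fP i else true) = (P s).*2.+1.
    rewrite binvalS ltnn -binP mul2n addn1; congr (_.*2.+1).
    by apply: eq_bigr => i _; rewrite ltnS -ltnS ltn_ord.
  rewrite /fP /=; case: ifP => h /=; first by rewrite odd_double.
  by rewrite odd_double.
Qed.

Lemma Hval n : H n 2 = (H1 n ^+ 2 - H2 n) / 2.
Proof. by rewrite -Hform mulr2n; field. Qed.

Lemma nuH3 : nu2 (H 3 2) = 0.
Proof.
have e : 2%:R ^+ 0 * H 3 2 = 2%:R ^+ 0 * ((1%:Z)%:~R / 1%:R).
  rewrite Hval !H1S !H2S H1_0 H2_0 -pmulrn; by field.
rewrite (nu2_gen (isT : (1%:Z) != 0) (isT : odd 1) e). by [].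
Qed.
Lemma nuH7 : nu2 (H 7 2) = -2.
Proof.
have e : 2%:R ^+ 2 * H 7 2 = 2%:R ^+ 0 * ((469%:Z)%:~R / 45%:R).
  rewrite Hval !H1S !H2S H1_0 H2_0 -pmulrn; by field.
rewrite (nu2_gen (isT : (469%:Z) != 0) (isT : odd 45) e).
rewrite (@logn_coprime 2 `|469%:Z|) //.
Qed.

Lemma f1 : fP 1 = true.
Proof. by rewrite rec // binvalS binval0 /= nuH3. Qed.

Lemma f2 : fP 2 = false.
Proof.
  by rewrite rec // !binvalS binval0 /= f1 /= nuH7.
Qed.

Lemma part1 s d : d 0%N = true -> (2 <= binval s d)%N ->
  (forall i, (i <= s)%N -> d i = fP i) -> (1 - (s%:Z) <= nu2 (H (binval s d) 2)).
Proof.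
  move=> d0 h2 hd.
  have eb : binval s d = P s by rewrite -binP; apply: eq_bigr => i _; rewrite hd // -ltnS.
  have s0 : (0 < s)%N by move: h2; case: s {hd eb} => //; rewrite binval0 d0.
  have := IP s; rewrite ZfE -eb => /C1 [->|]; first by rewrite nu2_0; lia.
  lia.
Qed.

Lemma part2 s d r : d 0%N = true -> (0 < r)%N -> (r <= s)%N ->
  (forall i, (i < r)%N -> d i = fP i) -> d r <> fP r ->
  nu2 (H (binval s d) 2) = (r%:Z - (2 * s)%N%:Z).
Proof.
move=> d0; case: r => [//|r'] _ hrs hd hr.
set r := r'.+1.
have eQ : binval r' d = P r'.
  by rewrite -binP; apply: eq_bigr => i _; rewrite hd // ltnS -ltnS.
have ho1 : Odd (X r (binval r d)) by exact: K4.
have ho2 : Odd (X r (P r)) by rewrite -binP; exact: K4.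
have hIP := IP r.
have key : exists u, Odd u /\ Zf r (binval r d) = 2%:R ^+ r.+1 * u.
  move: ho1 ho2 hIP hr; rewrite /r binvalS eQ PS mul2n.
  case: (d r'.+1); case: (fP r'.+1) => // ho1 ho2 hIP _; rewrite ?addn0 ?addn1 in ho1 ho2 hIP *.
    have h6 := K6 ho2.
    have [u [hu e]] := Odd_add (Dv_D h6 hIP).
    exists u; split => //; rewrite -e; ring.
  have h6 := K6 ho1.
  have [u [hu e]] := Odd_sub (Dv_B hIP h6).
  exists u; split => //; rewrite -e; ring.
have [u [hu e]] := key.
have h5 := K5 d0 hrs.
have [v [hv ev]] : exists v, Odd v /\ Zf s (binval s d) = 2%:R ^+ r.+1 * v.
  have hm : Dv r.+2 (2%:R ^+ r.+1 * 1 * (u - 1)).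
    have -> : r.+2 = (r.+1 + 1)%N by rewrite addn1.
    by apply: Dv_M => //; apply: Dv_scale; exact: (Z2_int 1).
  have [v [hv ev]] := Odd_add (Dv_D h5 hm).
  exists v; split => //; rewrite -ev.
  rewrite e. ring.
rewrite ZfE in ev; rewrite (C2 hv ev); lia.
Qed.

Local Close Scope ring_scope.

Theorem corollary2p1 :
  exists f : nat -> bool,
    (* recursive determination *)
    f 0%N = true /\
    (forall s : nat, (0 < s)%N ->
       f s = ((1 - (s%:Z))%R <= nu2 (H (binval s (fun i => if (i < s)%N then f i else true)) 2))%R) /\
    (* properties (i) and (ii) *)
    (forall (s : nat) (d : nat -> bool), d 0%N = true -> (2 <= binval s d)%N ->
       ((forall i, (i <= s)%N -> d i = f i) ->
          ((1 - (s%:Z))%R <= nu2 (H (binval s d) 2))%R) /\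
       (forall r : nat, (0 < r)%N -> (r <= s)%N ->
          (forall i, (i < r)%N -> d i = f i) -> d r <> f r ->
          nu2 (H (binval s d) 2) = (r%:Z - (2 * s)%N%:Z)%R)) /\
    (* in particular *)
    f 0%N = true /\ f 1%N = true /\ f 2%N = false.
Proof.
exists fP; split => //; split; first exact: rec.
split; last by rewrite f1 f2.
move=> s d d0 h2; split; first exact: part1.
by move=> r r0 hrs hd hr; apply: part2.
Qed.
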